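(* Let $K$ be a field, $S=K[x_1,\ldots,x_n]$, $I\subset S$ a monomial ideal with $I\ne S$, and let $\lambda^{(1)},\ldots,\lambda^{(p)}$ be the scalar matrices of the $\mathbb{Z}^n$-graded minimal free resolution of $S/I$ (see context). Then the sequence of $K$-linear maps \[ 0\to K^{\beta_p}\xrightarrow{\lambda^{(p)}}K^{\beta_{p-1}}\xrightarrow{\lambda^{(p-1)}}\cdots\xrightarrow{\lambda^{(2)}}K^{\beta_1}\xrightarrow{\lambda^{(1)}}K\to0 \] is an exact complex.
   Context: Let $G(I)=\{x^{a_1},\ldots,x^{a_m}\}$ be the minimal monomial generators, $x^a=x_1^{a(1)}\cdots x_n^{a(n)}$. Let $0\to F_p\to\cdots\to F_1\to F_0\to S/I\to 0$ be the $\mathbb{Z}^n$-graded minimal free resolution of $S/I$ with differential $\partial$, where $F_0=S$ with basis $f_{01}$ of degree $0$, and $F_i=\bigoplus_{j=1}^{\beta_i}Sf_{ij}$ with $f_{ij}$ homogeneous of multidegree $a_{ij}\in\mathbb{N}^n$; here $\beta_1=m$, $a_{1j}=a_j$ and $\partial(f_{1j})=x^{a_j}f_{01}$. Write $\partial(f_{ij})=\sum_k\lambda^{(i)}_{kj}x^{a_{ij}-a_{i-1,k}}f_{i-1,k}$ with $\lambda^{(i)}_{kj}\in K$, where $\lambda^{(i)}_{kj}=0$ whenever $a_{ij}-a_{i-1,k}\notin\mathbb{N}^n$. The scalar matrices are $\lambda^{(i)}=(\lambda^{(i)}_{kj})\in K^{\beta_{i-1}\times\beta_i}$, so $\lambda^{(1)}=(1,\ldots,1)$.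 *)

(* Defs.v *)
From HB Require Import structures.
From mathcomp Require Import all_boot all_order all_algebra.
From mathcomp Require Import mpoly.
Set Implicit Arguments. Unset Strict Implicit. Unset Printing Implicit Defensive.
Import GRing.Theory.
Local Open Scope ring_scope.

(* Monomials x^a are encoded by their exponent vectors a : 'X_{1..n}
   (= N^n); 'X_[a] is the monomial polynomial x^a in {mpoly K[n]}.
   The free S-module F_i = S^{beta i} is represented by column vectors
   'cV[{mpoly K[n]}]_(beta i); a map F_i -> F_{i-1} by a
   (beta (i-1)) x (beta i) matrix acting on the left (column j = image of
   the basis vector f_{ij}). *)

Definition exact_at (R : comNzRingType) (m k l : nat)
  (A : 'M[R]_(m, k)) (B : 'M[R]_(k, l)) : Prop :=
  forall v : 'cV[R]_k, A *m v = 0 <-> exists w : 'cV[R]_l, v = B *m w.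

Definition res_diff (K : fieldType) (n : nat) (beta : nat -> nat)
  (deg : forall i : nat, 'I_(beta i) -> 'X_{1..n})
  (lam : forall i : nat, 'M[K]_(beta i.-1, beta i)) (i : nat)
  : 'M[{mpoly K[n]}]_(beta i.-1, beta i) :=
  \matrix_(k, j) ((lam i k j)%:MP * 'X_[(deg i j - deg i.-1 k)%MM]).

(* (p, beta, deg, lam) describe a Z^n-graded minimal free resolution
   0 -> F_p -> ... -> F_1 -> F_0 = S of S/(image of d_1):
   - F_0 = S with one basis element of degree 0;
   - F_i = 0 for i > p;
   - lambda^{(i)}_{kj} = 0 whenever a_{ij} - a_{i-1,k} is not in N^n
     (so d is homogeneous of multidegree 0);
   - minimality: d(F_i) lies in m F_{i-1}, i.e. no unit entries:
     lambda^{(i)}_{kj} = 0 whenever a_{ij} = a_{i-1,k};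
   - the complex of free S-modules is exact at every F_i, i >= 1
     (exactness at F_0 -> S/I is the statement coker d_1 = S/I, which holds
     by construction once d_1 = (x^{a_1} ... x^{a_m})). *)
Definition is_Zn_graded_min_free_res (K : fieldType) (n p : nat)
  (beta : nat -> nat) (deg : forall i : nat, 'I_(beta i) -> 'X_{1..n})
  (lam : forall i : nat, 'M[K]_(beta i.-1, beta i)) : Prop :=
  [/\ beta 0 = 1%N,
      (forall i, (p < i)%N -> beta i = 0%N) /\
      (forall k : 'I_(beta 0), deg 0%N k = 0%MM),
      (forall (i : nat) k j, (1 <= i)%N -> lam i k j != 0 ->
          (deg i.-1 k <= deg i j)%MM),
      (forall (i : nat) k j, (1 <= i)%N -> deg i j = deg i.-1 k ->
          lam i k j = 0)
    & (forall i : nat, (1 <= i)%N ->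
          exact_at (res_diff deg lam i) (res_diff deg lam i.+1))].

Definition min_mon_gens (n m : nat) (a : 'I_m -> 'X_{1..n}) : Prop :=
  forall j k : 'I_m, (a j <= a k)%MM -> j = k.

Definition mon_ideal (K : fieldType) (n m : nat) (a : 'I_m -> 'X_{1..n})
  (f : {mpoly K[n]}) : Prop :=
  exists c : 'I_m -> {mpoly K[n]}, f = \sum_(j < m) c j * 'X_[a j].

(* Exactness of  0 -> K^{beta p} -> ... -> K^{beta 1} -> K -> 0
   with maps lam p, ..., lam 1 : exact at K (lam 1 is onto) and exact at
   every K^{beta i}, 1 <= i <= p (at K^{beta p} this is injectivity of
   lam p, as beta (p+1) = 0). *)
Definition scalar_complex_exact (K : fieldType) (p : nat) (beta : nat -> nat)
  (lam : forall i : nat, 'M[K]_(beta i.-1, beta i)) : Prop :=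
  (forall u : 'cV[K]_(beta 0), exists w : 'cV[K]_(beta 1), u = lam 1%N *m w)
  /\ (forall i : nat, (1 <= i <= p)%N -> exact_at (lam i) (lam i.+1)).

(* Main.v *)
Require Import Defs.
From HB Require Import structures.
From mathcomp Require Import all_boot all_order all_algebra.
From mathcomp Require Import mpoly.
From mathcomp Require Import zify.
Set Implicit Arguments. Unset Strict Implicit. Unset Printing Implicit Defensive.
Import GRing.Theory.
Local Open Scope ring_scope.

Section S.
Variables (K : fieldType) (n : nat).
Definition ev1 (f : {mpoly K[n]}) : K := meval (fun _ : 'I_n => (1:K)) f.

Lemma ev1X (m : 'X_{1..n}) : ev1 'X_[m] = 1.
Proof. by rewrite /ev1 mevalX big1 // => i _; rewrite expr1n. Qed.

Lemma ev1CX c (m : 'X_{1..n}) : ev1 (c%:MP * 'X_[m]) = c.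
Proof. by rewrite /ev1 mevalM mevalC -/(ev1 _) ev1X mulr1. Qed.

Lemma ev1C c : ev1 c%:MP = c.
Proof. exact: mevalC. Qed.

Lemma ev1M r s t (A : 'M[{mpoly K[n]}]_(r, s)) (B : 'M_(s, t)) :
  map_mx ev1 (A *m B) = map_mx ev1 A *m map_mx ev1 B.
Proof. exact: map_mxM. Qed.

Lemma mnm_chain (a b c : 'X_{1..n}) : (a <= b)%MM -> (b <= c)%MM ->
  ((c - b) + (b - a) = c - a)%MM.
Proof.
move=> /mnm_lepP ab /mnm_lepP bc; apply/mnmP => i.
rewrite mnmDE !mnmBE; have := ab i; have := bc i; lia.
Qed.
End S.

Unset Implicit Arguments.
Section Main.
Variables (K : fieldType) (n : nat) (beta : nat -> nat)
  (deg : forall i : nat, 'I_(beta i) -> 'X_{1..n})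
  (lam : forall i : nat, 'M[K]_(beta i.-1, beta i)).

Lemma ev_diff i : map_mx (@ev1 K n) (res_diff deg lam i) = lam i.
Proof. by apply/matrixP => k j; rewrite !mxE ev1CX. Qed.

Definition supdeg i : 'X_{1..n} :=
  [multinom (\sum_(j0 < beta i) (deg i j0) k0)%N | k0 < n].

Lemma le_supdeg i j : (deg i j <= supdeg i)%MM.
Proof.
apply/mnm_lepP => k; rewrite mnmE (bigD1 j) //=; exact: leq_addr.
Qed.

Lemma exact_step i :
  (1 <= i)%N ->
  (forall k j, lam i k j != 0 -> (deg i.-1 k <= deg i j)%MM) ->
  exact_at (res_diff deg lam i) (res_diff deg lam i.+1) ->
  exact_at (lam i) (lam i.+1).
Proof.
move=> i1 Hle Hex v; split.
- move=> Hv.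
  pose c := supdeg i.
  pose V : 'cV[{mpoly K[n]}]_(beta i) :=
    \col_j ((v j 0)%:MP * 'X_[(c - deg i j)%MM]).
  have HV : res_diff deg lam i *m V = 0.
    apply/matrixP => k z; rewrite !mxE.
    transitivity (\sum_j (lam i k j * v j 0)%:MP * 'X_[(c - deg i.-1 k)%MM]).
      apply: eq_bigr => j _; rewrite !mxE.
      have [->|nz] := eqVneq (lam i k j) 0.
        by rewrite !mul0r.
      rewrite mulrACA -mpolyCM -mpolyXD [X in 'X_[X]]addmC mnm_chain //.
      exact: Hle. exact: le_supdeg.
    rewrite -mulr_suml -raddf_sum /=.
    have := congr1 (fun M : 'M[K]_(beta i.-1, 1) => M k 0) Hv; rewrite !mxE => ->.
    by rewrite mpolyC0 mul0r.
  have [W HW] := (Hex V).1 HV.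
  exists (map_mx (@ev1 K n) W).
  rewrite -ev_diff -ev1M -HW; apply/matrixP => j z.
  by rewrite (ord1 z) !mxE ev1CX.
- case=> w ->.
  pose W : 'cV[{mpoly K[n]}]_(beta i.+1) := map_mx (@mpolyC n K) w.
  have H0 := (Hex (res_diff deg lam i.+1 *m W)).2 (ex_intro _ W erefl).
  have := congr1 (map_mx (@ev1 K n)) H0.
  rewrite !ev1M ev_diff (ev_diff i.+1).
  have -> : map_mx (@ev1 K n) 0 = 0 :> 'M_(beta i.-1, 1) by apply/matrixP=> ? ?; rewrite !mxE /ev1 meval0.
  move=> <-; congr (_ *m (_ *m _)).
  by apply/matrixP => j z; rewrite !mxE ev1C.
Qed.
End Main.

Theorem lemma1p3 (K : fieldType) (n m : nat) (a : 'I_m -> 'X_{1..n})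
  (p : nat) (beta : nat -> nat) (deg : forall i : nat, 'I_(beta i) -> 'X_{1..n})
  (lam : forall i : nat, 'M[K]_(beta i.-1, beta i)) (Hb0 : beta 0%N = 1%N) (Hb1 : beta 1%N = m) :
  (0 < m)%N ->
  (forall j, a j != 0%MM) ->
  min_mon_gens a ->
  (forall j : 'I_(beta 1%N), deg 1%N j = a (cast_ord Hb1 j)) ->
  (forall (k : 'I_(beta 0%N)) (j : 'I_(beta 1%N)), lam 1%N k j = 1) ->
  is_Zn_graded_min_free_res p deg lam ->
  (* the resolution resolves S/I: image of d_1 : F_1 -> F_0 = S is I *)
  (forall f : {mpoly K[n]}, mon_ideal a f <->
     exists w : 'cV[{mpoly K[n]}]_(beta 1%N),
       f = (res_diff deg lam 1%N *m w) (cast_ord (esym Hb0) ord0) ord0) ->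
  scalar_complex_exact p lam.
Proof.
move=> m0 _ _ _ Hl1 [_ _ Hle _ Hex] _; split.
- move=> u.
  have b1 : (0 < beta 1)%N by rewrite Hb1.
  pose j0 : 'I_(beta 1) := Ordinal b1.
  exists (\col_j (if j == j0 then \sum_k u k 0 else 0)).
  apply/matrixP => k z; rewrite (ord1 z) !mxE.
  set s := (\sum_k u k 0); rewrite (bigD1 j0) //= big1 => [|j Hj]; last by rewrite !mxE (negbTE Hj) mulr0.
  rewrite !mxE eqxx Hl1 mul1r addr0 /s (bigD1 k) //= big1 ?addr0 //.
  move=> k' /eqP []; apply/val_inj.
  have hk : (k < 1)%N by rewrite -Hb0.
  have hk' : (k' < 1)%N by rewrite -Hb0.
  rewrite /=; lia.
- move=> i /andP [i1 _]; apply: exact_step => //; last exact: Hex.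
  by move=> k j; apply: Hle.
Qed.
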